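(* Let $\lambda_1,\lambda_2\ge0$ with $\lambda_1+\lambda_2(p-1)>0$, and let $w_i=\lambda_1+\lambda_2(p-i)$ for $i=1,\dots,p$. Let $\mathbf A\in\mathbb R^{n\times p}$ with columns $\mathbf a_1,\dots,\mathbf a_p$, let $\mathbf y\in\mathbb R^n$, and let $\widehat{\mathbf x}$ be any minimizer of $\|\mathbf A\mathbf x-\mathbf y\|_1+\sum_{i=1}^p w_i|x|_{[i]}$ over $\mathbf x\in\mathbb R^p$. Then for every pair $(i,j)$ with $\|\operatorname{sign}(\widehat x_i)\mathbf a_i-\operatorname{sign}(\widehat x_j)\mathbf a_j\|_1<\lambda_2$ we have $|\widehat x_i|=|\widehat x_j|$. Moreover, if the columns satisfy $\mathbf 1^T\mathbf a_k=0$ and $\|\mathbf a_k\|_2=1$ for all $k$, and $\rho_{ij}=\mathbf a_i^T\mathbf a_j$, then for every pair $(i,j)$ with $\sqrt{n(2-2\rho_{ij}\operatorname{sign}(\widehat x_i\widehat x_j))}<\lambda_2$ we have $|\widehat x_i|=|\widehat x_j|$.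
   Context: $|x|_{[i]}$ denotes the $i$-th largest component of $\mathbf x$ in magnitude; $\mathbf 1$ is the all-ones vector; $\operatorname{sign}$ denotes the sign function. *)

(* Defs.v *)
From HB Require Import structures.
From mathcomp Require Import all_boot all_order all_algebra.
Set Implicit Arguments. Unset Strict Implicit. Unset Printing Implicit Defensive.
Import Order.TTheory GRing.Theory Num.Theory.
Local Open Scope ring_scope.

(* The magnitudes |x_k| sorted in non-increasing order:
   nth 0 (sorted_abs x) i = |x|_[i+1] (0-indexed i). *)
Definition sorted_abs (R : realDomainType) (p : nat) (x : 'cV[R]_p) : seq R :=
  sort (fun a b : R => b <= a) [seq `|x k 0| | k <- enum 'I_p].

Definition oscar_w (R : realDomainType) (p : nat) (l1 l2 : R) (i : 'I_p) : R :=
  l1 + l2 * (p%:R - (i.+1)%:R).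

Definition l1_oscar_obj (R : realDomainType) (n p : nat) (l1 l2 : R)
    (A : 'M[R]_(n, p)) (y : 'cV[R]_n) (x : 'cV[R]_p) : R :=
  \sum_(r < n) `|(A *m x - y) r 0|
  + \sum_(i < p) oscar_w l1 l2 i * nth 0 (sorted_abs x) i.

(* Main.v *)
Require Import Defs.
From HB Require Import structures.
From mathcomp Require Import all_boot all_order all_algebra.
From mathcomp Require Import ring lra.
Set Implicit Arguments. Unset Strict Implicit. Unset Printing Implicit Defensive.
Import Order.TTheory GRing.Theory Num.Theory.
Local Open Scope ring_scope.

Section S.
Variable R : rcfType.

Definition DD (s : seq R) := \sum_(a <- s) \sum_(b <- s) Num.max a b.

Lemma natS (m : nat) : (m.+1)%:R = m%:R + 1 :> R.
Proof. by rewrite -addn1 natrD. Qed.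

Lemma sorted_pen (c0 c1 : R) (s : seq R) : sorted (fun a b : R => b <= a) s ->
  2 * \sum_(i < size s) (c0 + c1 * ((size s)%:R - (i.+1)%:R)) * nth 0 s i =
  2 * c0 * (\sum_(a <- s) a) + c1 * (DD s - \sum_(a <- s) a).
Proof.
elim: s => [|a t IH] Hs.
  by rewrite /DD !big_nil big_ord0; lra.
have Ht : sorted (fun a b : R => b <= a) t by exact: path_sorted Hs.
have Ha : all (fun b => b <= a) t.
  apply: (order_path_min _ Hs) => x y z /= h1 h2; exact: le_trans h2 h1.
rewrite /= big_ord_recl /=.
have -> : \sum_(i < size t) (c0 + c1 * ((size t).+1%:R - (bump 0 i).+1%:R)) *
      nth 0 (a :: t) (bump 0 i) =
   \sum_(i < size t) (c0 + c1 * ((size t)%:R - (i.+1)%:R)) * nth 0 t i.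
  apply: eq_bigr => i _; rewrite /bump /= add1n (natS (size t)) (natS i.+1); congr (_ * _); lra.
rewrite /DD !big_cons.
have E1 : \sum_(b <- t) Num.max a b = a *+ size t.
  rewrite (eq_big_seq (fun _ => a)); last first.
    by move=> b hb; move/allP: Ha => /(_ b hb) hb'; rewrite max_l.
  by rewrite big_const_seq count_predT; elim: (size t) => //= k ->; rewrite mulrS.
have E2 : \sum_(b <- t) \sum_(c <- a :: t) Num.max b c =
    a *+ size t + DD t.
  under eq_bigr => b _ do rewrite big_cons.
  rewrite big_split /=; congr (_ + _).
  rewrite (eq_big_seq (fun _ => a)); last first.
    by move=> b hb; move/allP: Ha => /(_ b hb) hb'; rewrite max_r.
  by rewrite big_const_seq count_predT; elim: (size t) => //= k ->; rewrite mulrS.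
rewrite E1 E2 maxxx -[a *+ size t]mulr_natr.
move: (IH Ht); rewrite /DD => IH'.
have h1 : (size t).+1%:R - 1 = (size t)%:R :> R by rewrite natS; lra.
rewrite h1.
set S := \sum_(i < size t) _. set U := \sum_(b <- t) b. set V := \sum_(b <- t) _.
rewrite -/S -/U -/V in IH'. rewrite mulrDr IH'. ring.
Qed.

Definition Pen (l1 l2 : R) (p : nat) (v : 'I_p -> R) :=
  2 * l1 * (\sum_k v k) + l2 * (\sum_k \sum_l Num.max (v k) (v l) - \sum_k v k).

Lemma pen_formula (p : nat) (l1 l2 : R) (x : 'cV[R]_p) :
  2 * \sum_(i < p) oscar_w l1 l2 i * nth 0 (sorted_abs x) i =
  Pen l1 l2 (fun k => `|x k 0|).
Proof.
have Hsz : size (sorted_abs x) = p by rewrite /sorted_abs size_sort size_map size_enum_ord.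
have Hso : sorted (fun a b : R => b <= a) (sorted_abs x).
  by apply: sort_sorted => a b; rewrite le_total.
have := sorted_pen l1 l2 Hso; rewrite Hsz => ->.
have Hp : perm_eq (sorted_abs x) [seq `|x k 0| | k <- enum 'I_p] by rewrite /sorted_abs perm_sort.
have E : forall F : R -> R, \sum_(a <- sorted_abs x) F a = \sum_k F `|x k 0|.
  by move=> F; rewrite (perm_big _ Hp) big_map big_enum.
rewrite /Pen /DD !E; congr (_ + _ * (_ - _)).
by apply: eq_bigr => k _; rewrite E.
Qed.

Lemma split2 (p : nat) (f : 'I_p -> R) (i j : 'I_p) : i != j ->
  \sum_k f k = f i + f j + \sum_(k | (k != i) && (k != j)) f k.
Proof. by move=> hij; rewrite (bigD1 i) //= (bigD1 j) 1?eq_sym //= addrA. Qed.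

Lemma pair_ineq (vi vj w a d : R) : 0 <= d -> w <= vj + d -> vj + d <= vi - d ->
  Num.max (vi - d) a + Num.max w a <= Num.max vi a + Num.max vj a.
Proof.
move=> hd hw hv.
have h1 : Num.max w a <= Num.max (vj + d) a by rewrite ge_max !le_max hw lexx orbT.
apply: le_trans (lerD (lexx _) h1) _.
case: (leP a vj) => h2.
  rewrite !max_l //; lra.
case: (leP a vi) => h3; last by rewrite !max_r //; lra.
case: (leP a (vj + d)) => h4.
  by rewrite max_l; lra.
have : Num.max (vi - d) a <= vi by rewrite ge_max; apply/andP; split; lra.
lra.
Qed.

Lemma pen_decrease (p : nat) (l1 l2 : R) (v v' : 'I_p -> R) (i j : 'I_p) (d : R) :
  i != j -> 0 <= l1 -> 0 <= l2 -> 0 <= d ->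
  (forall k, k != i -> k != j -> v' k = v k) ->
  v' i = v i - d -> v' j <= v j + d -> v j + d <= v i - d ->
  Pen l1 l2 v' <= Pen l1 l2 v - 2 * l2 * d.
Proof.
move=> hij hl1 hl2 hd hO hi hj hji.
have hsO : \sum_(k | (k != i) && (k != j)) v' k = \sum_(k | (k != i) && (k != j)) v k.
  by apply: eq_bigr => k /andP[h1 h2]; rewrite hO.
have hsum : \sum_k v' k <= \sum_k v k - 0.
  by rewrite subr0 (split2 v' hij) (split2 v hij) hsO hi; lra.
have Hd : forall w : 'I_p -> R, \sum_k \sum_l Num.max (w k) (w l) =
   Num.max (w i) (w i) + Num.max (w i) (w j) + \sum_(l | (l != i) && (l != j)) Num.max (w i) (w l)
   + (Num.max (w j) (w i) + Num.max (w j) (w j) + \sum_(l | (l != i) && (l != j)) Num.max (w j) (w l))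
   + \sum_(k | (k != i) && (k != j)) (Num.max (w k) (w i) + Num.max (w k) (w j) +
        \sum_(l | (l != i) && (l != j)) Num.max (w k) (w l)).
  move=> w; rewrite (split2 _ hij) !(split2 (fun l => Num.max _ (w l)) hij).
  congr (_ + _); apply: eq_bigr => k _; by rewrite (split2 (fun l => Num.max _ (w l)) hij).
have hji' : v' j <= v' i by rewrite hi; lra.
have Hcross : \sum_(l | (l != i) && (l != j)) Num.max (v' i) (v' l)
   + \sum_(l | (l != i) && (l != j)) Num.max (v' j) (v' l)
   + \sum_(k | (k != i) && (k != j)) (Num.max (v' k) (v' i) + Num.max (v' k) (v' j) +
        \sum_(l | (l != i) && (l != j)) Num.max (v' k) (v' l))
   <= \sum_(l | (l != i) && (l != j)) Num.max (v i) (v l)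
   + \sum_(l | (l != i) && (l != j)) Num.max (v j) (v l)
   + \sum_(k | (k != i) && (k != j)) (Num.max (v k) (v i) + Num.max (v k) (v j) +
        \sum_(l | (l != i) && (l != j)) Num.max (v k) (v l)).
  rewrite -!big_split /=; apply: ler_sum => k /andP[h1 h2].
  rewrite (hO k h1 h2).
  have hk : \sum_(l | (l != i) && (l != j)) Num.max (v k) (v' l) =
            \sum_(l | (l != i) && (l != j)) Num.max (v k) (v l).
    by apply: eq_bigr => l /andP[h3 h4]; rewrite !hO.
  rewrite hk hi (maxC (v k) (v i - d)) (maxC (v k) (v' j)) (maxC (v k) (v i)) (maxC (v k) (v j)).
  have := pair_ineq (v k) hd hj hji; lra.
rewrite /Pen !Hd !maxxx (max_l hji') (max_r hji').
have hvji : v j <= v i by lra.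
rewrite (max_l hvji) (max_r hvji).
move: Hcross; rewrite hi.
set c' := \sum_(l | _) Num.max (v i - d) (v' l).
set c2' := \sum_(l | _) Num.max (v' j) (v' l).
set c3' := \sum_(k | _) _.
set c := \sum_(l | _) Num.max (v i) (v l).
set c2 := \sum_(l | _) Num.max (v j) (v l).
set c3 := \sum_(k | (k != i) && (k != j)) (Num.max (v k) (v i) + _ + _).
move=> Hc.
rewrite (split2 v' hij) (split2 v hij) hsO hi.
set so := \sum_(k | _) v k.
nra.
Qed.

Lemma sq_expand (N : nat) (a : 'I_N -> R) (m : R) :
  \sum_r (a r - m) ^+ 2 = \sum_r a r ^+ 2 - (\sum_r a r) * m * 2 + m ^+ 2 * N%:R.
Proof.
have e1 : \sum_r (a r - m) ^+ 2 = \sum_r (a r ^+ 2 - (a r * m) * 2 + m ^+ 2).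
  by apply: eq_bigr => r _; rewrite sqrrB mulr_natr.
have e2 : \sum_r (a r ^+ 2 - (a r * m) * 2 + m ^+ 2) =
   \sum_r a r ^+ 2 - \sum_r (a r * m) * 2 + \sum_(r < N) m ^+ 2.
  by rewrite big_split sumrB.
rewrite e1 e2 -mulr_suml -mulr_suml sumr_const card_ord mulr_natr.
by rewrite !mulr_natr.
Qed.

Lemma cs_abs (n : nat) (v : 'I_n -> R) :
  (\sum_r `|v r|) ^+ 2 <= n%:R * \sum_r v r ^+ 2.
Proof.
case: n v => [|n] v; first by rewrite !big_ord0 expr0n /= mul0r.
have hQ : 0 <= \sum_r (`|v r| - (\sum_r `|v r|) / (n.+1)%:R) ^+ 2.
  by apply: sumr_ge0 => r _; exact: sqr_ge0.
rewrite sq_expand in hQ.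
have hT : \sum_r `|v r| ^+ 2 = \sum_r v r ^+ 2.
  by apply: eq_bigr => r _; rewrite (real_normK (num_real _)).
rewrite hT in hQ.
move: hQ.
move: (\sum_r `|v r|) (\sum_r v r ^+ 2) => s T hQ.
have hn : 0 < (n.+1)%:R :> R by exact: ltr0Sn.
have hm : s / (n.+1)%:R * (n.+1)%:R = s by rewrite divfK // gt_eqF.
move: hQ hm; move: (s / (n.+1)%:R) => m hQ hm.
have := mulr_ge0 (ltW hn) hQ.
rewrite -hm.
move: (n.+1)%:R hn => N hN.
have -> : N * (T - m * N * m * 2 + m ^+ 2 * N) = N * T - (m * N) ^+ 2 by ring.
by rewrite subr_ge0.
Qed.

Lemma claim (n p : nat) (l1 l2 : R) (A : 'M[R]_(n, p)) (y : 'cV[R]_n) (xh : 'cV[R]_p) :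
  0 <= l1 -> 0 <= l2 ->
  (forall x : 'cV[R]_p, l1_oscar_obj l1 l2 A y xh <= l1_oscar_obj l1 l2 A y x) ->
  forall i j : 'I_p,
     \sum_(r < n) `|Num.sg (xh i 0) * A r i - Num.sg (xh j 0) * A r j| < l2 ->
     `|xh j 0| < `|xh i 0| -> False.
Proof.
move=> hl1 hl2 opt i j hS hlt.
have hij : i != j by apply: contraTneq hlt => ->; rewrite ltxx.
have hji : j != i by rewrite eq_sym.
set S := \sum_(r < n) _ in hS.
set d := (`|xh i 0| - `|xh j 0|) / 2.
have hd2 : d * 2 = `|xh i 0| - `|xh j 0| by rewrite /d divfK // pnatr_eq0.
have hj0 : 0 <= `|xh j 0| := normr_ge0 _.
have hd : 0 < d by lra.
set si := Num.sg (xh i 0). set sj := Num.sg (xh j 0).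
pose x' : 'cV[R]_p := \matrix_(k, c) (if k == i then xh i 0 - si * d
   else if k == j then xh j 0 + sj * d else xh k c).
have hx'O : forall k, k != i -> k != j -> x' k 0 = xh k 0.
  by move=> k h1 h2; rewrite mxE (negbTE h1) (negbTE h2).
have hx'i : x' i 0 = xh i 0 - si * d by rewrite mxE eqxx.
have hx'j : x' j 0 = xh j 0 + sj * d by rewrite mxE (negbTE hji) eqxx.
have hdata : forall r, (A *m x' - y) r 0 = (A *m xh - y) r 0 + d * (sj * A r j - si * A r i).
  move=> r; rewrite mxE [(A *m xh - y) r 0]mxE [(A *m x') r 0]mxE [(A *m xh) r 0]mxE.
  rewrite (split2 (fun k => A r k * x' k 0) hij) (split2 (fun k => A r k * xh k 0) hij) hx'i hx'j.
  have -> : \sum_(k | (k != i) && (k != j)) A r k * x' k 0 =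
            \sum_(k | (k != i) && (k != j)) A r k * xh k 0.
    by apply: eq_bigr => k /andP[h1 h2]; rewrite hx'O.
  ring.
have Hdata : \sum_(r < n) `|(A *m x' - y) r 0| <= \sum_(r < n) `|(A *m xh - y) r 0| + d * S.
  rewrite /S mulr_sumr -big_split; apply: ler_sum => r _.
  rewrite hdata; apply: le_trans (ler_normD _ _) _.
  by rewrite normrM (gtr0_norm hd) distrC.
have hxi0 : xh i 0 != 0.
  by rewrite -normr_eq0 gt_eqF //; apply: le_lt_trans hlt.
have Hpen := @pen_decrease p l1 l2 (fun k => `|xh k 0|) (fun k => `|x' k 0|) i j d hij hl1 hl2 (ltW hd).
have Hp : Pen l1 l2 (fun k => `|x' k 0|) <= Pen l1 l2 (fun k => `|xh k 0|) - 2 * l2 * d.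
  apply: Hpen => /=.
  - by move=> k h1 h2; rewrite hx'O.
  - rewrite hx'i {1}(numEsg (xh i 0)) -/si -mulrBr normrM normr_sg hxi0 mul1r ger0_norm //.
    lra.
  - rewrite hx'j; apply: le_trans (ler_normD _ _) _; rewrite normrM (gtr0_norm hd).
    have : `|sj| <= 1 by rewrite normr_sg; case: (_ != 0).
    move=> h; have : `|sj| * d <= d by rewrite -[X in _ <= X]mul1r; apply: ler_wpM2r => //; exact: ltW.
    lra.
  - lra.
have := opt x'.
rewrite /l1_oscar_obj.
have := pen_formula l1 l2 x'. have := pen_formula l1 l2 xh.
move=> e1 e2.
have hdS : d * S < d * l2 by rewrite ltr_pM2l.
lra.
Qed.
End S.

Theorem corollary4 (R : rcfType) (n p : nat) (l1 l2 : R)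
    (A : 'M[R]_(n, p)) (y : 'cV[R]_n) (xh : 'cV[R]_p) :
  0 <= l1 -> 0 <= l2 -> 0 < l1 + l2 * (p%:R - 1) ->
  (forall x : 'cV[R]_p, l1_oscar_obj l1 l2 A y xh <= l1_oscar_obj l1 l2 A y x) ->
  (forall i j : 'I_p,
     \sum_(r < n) `|Num.sg (xh i 0) * A r i - Num.sg (xh j 0) * A r j| < l2 ->
     `|xh i 0| = `|xh j 0|) /\
  ((forall k : 'I_p, \sum_(r < n) A r k = 0) ->
   (forall k : 'I_p, Num.sqrt (\sum_(r < n) A r k ^+ 2) = 1) ->
   forall i j : 'I_p,
     Num.sqrt (n%:R * (2 - 2 * (\sum_(r < n) A r i * A r j)
                           * Num.sg (xh i 0 * xh j 0))) < l2 ->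
     `|xh i 0| = `|xh j 0|).
Proof.
move=> hl1 hl2 _ opt.
have C := @claim R n p l1 l2 A y xh hl1 hl2 opt.
have part1 : forall i j : 'I_p,
     \sum_(r < n) `|Num.sg (xh i 0) * A r i - Num.sg (xh j 0) * A r j| < l2 ->
     `|xh i 0| = `|xh j 0|.
  move=> i j hS.
  have hS' : \sum_(r < n) `|Num.sg (xh j 0) * A r j - Num.sg (xh i 0) * A r i| < l2.
    apply: le_lt_trans hS; rewrite le_eqVlt; apply/orP; left; apply/eqP; apply: eq_bigr => r _; exact: distrC.
  case: (ltgtP `|xh i 0| `|xh j 0|) => // h.
    by exfalso; exact: C j i hS' h.
  by exfalso; exact: C i j hS h.
split => //.
move=> _ hnorm i j hT; apply: part1.
set si := Num.sg (xh i 0). set sj := Num.sg (xh j 0).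
have hcs := cs_abs (fun r => si * A r i - sj * A r j).
have hn1 : forall k, \sum_(r < n) A r k ^+ 2 = 1.
  move=> k; have := hnorm k => h.
  have h0 : 0 <= \sum_(r < n) A r k ^+ 2 by apply: sumr_ge0 => r _; exact: sqr_ge0.
  have := sqr_sqrtr h0.

  by rewrite h expr1n => <-.
have hsq : \sum_(r < n) (si * A r i - sj * A r j) ^+ 2 =
   si ^+ 2 * (\sum_(r < n) A r i ^+ 2) + sj ^+ 2 * (\sum_(r < n) A r j ^+ 2)
   - 2 * (\sum_(r < n) A r i * A r j) * (si * sj).
  rewrite !mulr_sumr mulr_suml -big_split -sumrB; apply: eq_bigr => r _ /=; ring.
rewrite hsq !hn1 /si /sj !sqr_sg -sgrM in hcs.
set S := \sum_(r < n) _.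
set T := n%:R * _ in hT.
have hS0 : 0 <= S by apply: sumr_ge0 => r _.
have hST : S ^+ 2 <= T.
  apply: le_trans hcs _; rewrite /T ler_wpM2l ?ler0n //.
  set g := Num.sg _. set rho := \sum_(r < n) _.
  have h1 : (xh i 0 != 0)%:R <= 1 :> R by case: (_ != 0).
  have h2 : (xh j 0 != 0)%:R <= 1 :> R by case: (_ != 0).
  lra.
apply: le_lt_trans hT.
have hT0 : 0 <= T by apply: le_trans hST; exact: sqr_ge0.
by rewrite -(ger0_norm hS0) -sqrtr_sqr ler_sqrt.
Qed.
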